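(* Let $Q_1,\ldots,Q_n$ be positive definite real symmetric $n\times n$ matrices with $\sum_{i=1}^n\operatorname{tr}Q_i=n$. Let $H=\{x\in\mathbb R^n:\sum_i x_i=0\}$ and $f:H\to\mathbb R$, $f(x_1,\ldots,x_n)=\ln\det\left(\sum_{i=1}^n e^{x_i}Q_i\right)$, and let $(\xi_1,\ldots,\xi_n)\in H$ be a point at which $f$ attains its minimum on $H$. Let $S$ be an $n\times n$ matrix with $S^*S=\sum_{i=1}^n e^{\xi_i}Q_i$, let $T=S^{-1}$, $\tau_i=e^{\xi_i}$ and $B_i=\tau_iT^*Q_iT$ for $i=1,\ldots,n$. Then $$D(B_1,\ldots,B_n)\ \ge\ D(Q_1,\ldots,Q_n).$$
   Context: For real symmetric $n\times n$ matrices $Q_1,\ldots,Q_n$, the mixed discriminant is $D(Q_1,\ldots,Q_n)=\frac{\partial^n}{\partial t_1\cdots\partial t_n}\det(t_1Q_1+\cdots+t_nQ_n)$. $S^*$ denotes the transpose of $S$. (It is known that $f$ is strictly convex on $H$ and attains its minimum at a unique point, and then $(B_1,\ldots,B_n)$ is doubly stochastic.) *)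

(* Defs.v *)
From HB Require Import structures.
From Stdlib Require Import Reals Lra ClassicalEpsilon FunctionalExtensionality.
From mathcomp Require Import all_boot all_order all_algebra all_fingroup.

Set Implicit Arguments.
Unset Strict Implicit.
Unset Printing Implicit Defensive.

Import GRing.Theory.

Definition Req_bool (x y : R) : bool := if Req_EM_T x y then true else false.

Lemma Req_boolP : Equality.axiom Req_bool.
Proof. by move=> x y; rewrite /Req_bool; case: Req_EM_T => h; constructor. Qed.

HB.instance Definition _ := hasDecEq.Build R Req_boolP.

Definition R_find (P : pred R) (n : nat) : option R :=
  match excluded_middle_informative (exists x, P x) with
  | left h => Some (proj1_sig (constructive_indefinite_description _ h))
  | right _ => None
  end.

Lemma R_find_correct P n x : R_find P n = Some x -> P x.
Proof.
rewrite /R_find; case: excluded_middle_informative => // h [<-].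
exact: proj2_sig (constructive_indefinite_description _ h).
Qed.

Lemma R_find_complete (P : pred R) : (exists x, P x) -> exists n, R_find P n.
Proof. by move=> h; exists 0%N; rewrite /R_find; case: excluded_middle_informative. Qed.

Lemma R_find_ext (P Q : pred R) : P =1 Q -> R_find P =1 R_find Q.
Proof. by move=> /functional_extensionality ->. Qed.

HB.instance Definition _ :=
  hasChoice.Build R R_find_correct R_find_complete R_find_ext.

Lemma R_addA : ssrfun.associative Rplus. Proof. by move=> x y z; rewrite Rplus_assoc. Qed.
Lemma R_addC : ssrfun.commutative Rplus. Proof. exact: Rplus_comm. Qed.
Lemma R_add0 : ssrfun.left_id R0 Rplus. Proof. exact: Rplus_0_l. Qed.
Lemma R_addN : ssrfun.left_inverse R0 Ropp Rplus. Proof. exact: Rplus_opp_l. Qed.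

HB.instance Definition _ := GRing.isZmodule.Build R R_addA R_addC R_add0 R_addN.

Lemma R_mulA : ssrfun.associative Rmult. Proof. by move=> x y z; rewrite Rmult_assoc. Qed.
Lemma R_mulC : ssrfun.commutative Rmult. Proof. exact: Rmult_comm. Qed.
Lemma R_mul1 : ssrfun.left_id R1 Rmult. Proof. exact: Rmult_1_l. Qed.
Lemma R_mulDl : ssrfun.left_distributive Rmult Rplus. Proof. exact: Rmult_plus_distr_r. Qed.
Lemma R_one_neq0 : R1 != R0.
Proof. by apply/eqP; exact: R1_neq_R0. Qed.

HB.instance Definition _ :=
  GRing.Zmodule_isComNzRing.Build R R_mulA R_mulC R_mul1 R_mulDl R_one_neq0.

Definition R_inv (x : R) : R := if Req_EM_T x R0 then R0 else Rinv x.

Lemma R_mulVf (x : R) : x != R0 -> (R_inv x * x)%R = R1.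
Proof.
move=> hx; rewrite /R_inv; case: Req_EM_T => [h|h].
  by rewrite h eqxx in hx.
exact: Rinv_l.
Qed.

Lemma R_inv0 : R_inv R0 = R0.
Proof. by rewrite /R_inv; case: Req_EM_T. Qed.

HB.instance Definition _ := GRing.ComNzRing_isField.Build R R_mulVf R_inv0.

Local Open Scope ring_scope.

Definition symmetric_mx (n : nat) (Q : 'M[R]_n) : Prop := Q^T = Q.

Definition posdef_mx (n : nat) (Q : 'M[R]_n) : Prop :=
  symmetric_mx Q /\
  forall x : 'cV[R]_n, x != 0 -> Rlt R0 ((x^T *m Q *m x) 0 0).

(* Mixed discriminant
     D(Q_1,...,Q_n) = d^n/(dt_1...dt_n) det(t_1 Q_1 + ... + t_n Q_n).
   Since det(sum_i t_i Q_i) is multilinear in the columns, it equals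
   sum_{g : 'I_n -> 'I_n} (prod_j t_{g j}) det(matrix whose j-th column is
   the j-th column of Q_{g j}); the coefficient of t_1...t_n (which is the
   mixed derivative, the polynomial being of degree n) is the sum over the
   bijections g, i.e. over permutations. *)
Definition mixed_discr (n : nat) (Q : 'I_n -> 'M[R]_n) : R :=
  \sum_(s : 'S_n) \det (\matrix_(i < n, j < n) Q (s j) i j).

Definition f_lndet (n : nat) (Q : 'I_n -> 'M[R]_n) (x : 'I_n -> R) : R :=
  ln (\det (\sum_(i < n) exp (x i) *: Q i)).

Definition in_H (n : nat) (x : 'I_n -> R) : Prop := \sum_(i < n) x i = 0.

(* Main.v *)
Set Warnings "-notation-overridden,-ambiguous-paths".
Require Import Defs.
From HB Require Import structures.
From Stdlib Require Import Reals Lra.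
From mathcomp Require Import all_boot all_order all_algebra all_fingroup.
From mathcomp Require Import ring.
Import GRing.Theory.
Local Open Scope ring_scope.

Lemma sum_ge0 (I : finType) (P : pred I) (f : I -> R) :
  (forall i, P i -> Rle R0 (f i)) -> Rle R0 (\sum_(i | P i) f i).
Proof.
move=> h; apply: (big_ind (fun x => Rle R0 x)) => //.
- exact: Rle_refl.
- move=> x y hx hy; change (Rle R0 (Rplus x y)); lra.
Qed.

Lemma prod_ge0 (I : finType) (f : I -> R) :
  (forall i, Rle R0 (f i)) -> Rle R0 (\prod_i f i).
Proof.
move=> h; apply: (big_ind (fun x => Rle R0 x)) => //.
- change (Rle R0 R1); lra.
- move=> x y hx hy; change (Rle R0 (Rmult x y)); nra.
Qed.

Lemma prod_le (I : finType) (f g : I -> R) :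
  (forall i, Rle R0 (f i)) -> (forall i, Rle (f i) (g i)) ->
  Rle (\prod_i f i) (\prod_i g i).
Proof.
move=> h0 h.
suff : Rle R0 (\prod_i f i) /\ Rle (\prod_i f i) (\prod_i g i) by case.
apply: (big_ind2 (fun x y => Rle R0 x /\ Rle x y)).
- change (Rle R0 R1 /\ Rle R1 R1); lra.
- move=> x1 x2 y1 y2 [hx1 hx] [hy1 hy].
  change (Rle R0 (Rmult x1 y1) /\ Rle (Rmult x1 y1) (Rmult x2 y2)).
  split; first nra.
  apply: Rmult_le_compat => //.
- move=> i _; split; [exact: h0 | exact: h].
Qed.
Lemma qf_block n (a : 'M[R]_1) (w : 'M_(1,n)) (v : 'M_(n,1)) (P' : 'M_n) (y : 'M_1) (z : 'cV_n) :
 (col_mx y z)^T *m block_mx a w v P' *m col_mx y z =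
   y^T *m a *m y + z^T *m v *m y + (y^T *m w *m z + z^T *m P' *m z).
Proof. by rewrite tr_col_mx mul_row_block mul_row_col !mulmxDl. Qed.

Lemma chol n (P : 'M[R]_n) : posdef_mx P -> exists L : 'M[R]_n, is_trig_mx L /\ P = L *m L^T.
Proof.
elim: n P => [|n IH] P.
  move=> _; exists 0; split; first by apply/forallP => -[].
  by apply/matrixP => -[].
change 'M[R]_(1 + n) in P.
move=> [hsym hpos].
have [a [w [v [P' hP]]]] : exists a w v P', P = block_mx a w v P'.
  by exists (ulsubmx P), (ursubmx P), (dlsubmx P), (drsubmx P); rewrite submxK.
subst P.
have hpos' : forall x : 'cV_(1+n), x != 0 -> Rlt R0 ((x^T *m block_mx a w v P' *m x) 0 0) := hpos.
have hsym' : (block_mx a w v P')^T = block_mx a w v P' := hsym.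
clear hpos; rename hpos' into hpos.
move: hsym'; rewrite tr_block_mx => /eq_block_mx [ha hw hv hP'].
rewrite -hw in hpos *.
set al := a 0 0.
have hal : a = al%:M by rewrite {1}(mx11_scalar a).
have alpos : Rlt R0 al.
  have := hpos (col_mx 1 0).
  rewrite col_mx_eq0 oner_eq0 /= => /(_ isT).
  by rewrite qf_block trmx0 !mul0mx !mulmx0 !addr0 trmx1 mul1mx mulmx1.
have al0 : al != 0 by apply/eqP => h; rewrite h in alpos; exact: Rlt_irrefl _ alpos.
pose S' := P' - al^-1 *: (v *m v^T).
have hS' : posdef_mx S'.
  split.
    by rewrite /symmetric_mx /S' linearB /= linearZ /= trmx_mul trmxK hP'.
  move=> z hz.
  pose b := (v^T *m z) 0 0.
  have hb : v^T *m z = b%:M by rewrite {1}(mx11_scalar (v^T *m z)).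
  have := hpos (col_mx (- (al^-1 * b))%:M z).
  rewrite col_mx_eq0 (negbTE hz) andbF => /(_ isT).
  rewrite qf_block hal tr_scalar_mx.
  rewrite -[(- _)%:M *m v^T *m z]mulmxA hb.
  have hb' : z^T *m v = b%:M by rewrite -(trmxK (z^T *m v)) trmx_mul trmxK hb tr_scalar_mx.
  rewrite hb' -!scalar_mxM.
  have -> : z^T *m S' *m z = z^T *m P' *m z - (al^-1 * (b * b))%:M.
    rewrite /S' mulmxBr mulmxBl -scalemxAr -scalemxAl !mulmxA -[z^T *m v *m v^T *m z]mulmxA hb.
    rewrite hb'.
    by rewrite -scalar_mxM scale_scalar_mx.
  have e : - (al^-1 * b) * al * - (al^-1 * b) + b * - (al^-1 * b) + - (al^-1 * b) * b = - (al^-1 * (b * b)).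
    by field.
  by rewrite addrA -!raddfD /= e addrC raddfN.
have [L' [trL' eL']] := IH S' hS'.
pose c := sqrt al.
have cpos : Rlt R0 c := sqrt_lt_R0 _ alpos.
have c0 : c != 0 by apply/eqP => h; rewrite h in cpos; exact: Rlt_irrefl _ cpos.
have cc : c * c = al := sqrt_sqrt _ (Rlt_le _ _ alpos).
pose L : 'M_(1 + n) := block_mx (c%:M : 'M_1) (0 : 'M_(1, n)) (c^-1 *: v) L'.
exists L; split.
  change (is_trig_mx L).
  by rewrite /L is_trig_block_mx // eqxx scalar_mx_is_trig trL'.
change (block_mx a v^T v P' = L *m L^T).
rewrite /L tr_block_mx mulmx_block !trmx0 !mulmx0 !mul0mx !addr0 tr_scalar_mx.
have tZ : (c^-1 *: v)^T = c^-1 *: v^T by rewrite linearZ.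
rewrite tZ; congr block_mx.
- by rewrite -scalar_mxM cc hal.
- by rewrite mul_scalar_mx scalerA mulfV // scale1r.
- by rewrite mul_mx_scalar scalerA mulrC mulVf // scale1r.
- rewrite -eL' /S' -scalemxAl -scalemxAr scalerA -invfM cc.
  by rewrite addrC subrK.
Qed.
Arguments chol {n P}.

Lemma exp_sum (I : finType) (f : I -> R) : exp (\sum_i f i) = \prod_i exp (f i).
Proof. apply: (big_morph exp exp_plus exp_0). Qed.

Lemma posdef_det_neq0 n (P : 'M[R]_n) : posdef_mx P -> \det P != 0.
Proof.
move=> [hs hp]; apply/negP => /det0P [v hv hvP].
have := hp v^T; rewrite trmx_eq0 => /(_ hv).
rewrite trmxK hvP mul0mx mxE; exact: Rlt_irrefl.
Qed.

Arguments posdef_det_neq0 {n P}.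

Lemma chol_diag n (P L : 'M[R]_n) i : P = L *m L^T -> Rle (L i i * L i i) (P i i).
Proof.
move=> ->; rewrite !mxE (bigD1 i) //= mxE.
have : Rle R0 (\sum_(j < n | j != i) L i j * L^T j i).
  apply: sum_ge0 => j _; rewrite mxE; exact: Rle_0_sqr.
move: (\sum_(j < n | j != i) _) => r hr.
change (Rle (L i i * L i i) (Rplus (L i i * L i i) r)); lra.
Qed.

Arguments chol_diag {n P L}.

Lemma posdef_det_pos n (P : 'M[R]_n) : posdef_mx P -> Rlt R0 (\det P).
Proof.
move=> hP; have [L [tL eL]] := chol hP.
have := posdef_det_neq0 hP; rewrite eL det_mulmx det_tr => h.
have hL : \det L <> 0 by move=> e; rewrite e mul0r eqxx in h.
exact: Rlt_0_sqr hL.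
Qed.

Definition trm {n} (P : 'M[R]_n) : R := \tr P - n%:R.

Lemma det_le_exp_tr n (P : 'M[R]_n) : posdef_mx P -> Rle (\det P) (exp (trm P)).
Proof.
move=> hP; have [L [tL eL]] := chol hP.
have hd : forall i, Rle R0 (P i i).
  move=> i; apply: Rle_trans (chol_diag i eL); exact: Rle_0_sqr.
have -> : trm P = \sum_i (P i i - 1).
  by rewrite sumrB sumr_const card_ord.
rewrite exp_sum.
apply: (@Rle_trans _ (\prod_i P i i)).
  rewrite {1}eL det_mulmx det_tr (det_trig tL) -big_split /=.
  apply: prod_le => i; [exact: Rle_0_sqr | exact: chol_diag].
apply: prod_le => // i.
have := exp_ineq1_le (P i i - 1).
change (Rle (Rplus R1 (Rplus (P i i) (Ropp R1))) (exp (Rplus (P i i) (Ropp R1))) ->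
        Rle (P i i) (exp (Rplus (P i i) (Ropp R1)))); lra.
Qed.

Lemma posdef_comb n (c : 'I_n -> R) (Q : 'I_n -> 'M[R]_n) :
  (forall i, Rlt R0 (c i)) -> (forall i, posdef_mx (Q i)) -> posdef_mx (\sum_i c i *: Q i).
Proof.
move=> hc hQ; split.
  rewrite /symmetric_mx raddf_sum; apply: eq_bigr => i _.
  change ((c i *: Q i)^T = c i *: Q i); by rewrite linearZ /= (proj1 (hQ i)).
move=> x hx.
case: (posnP n) => [n0|npos].
  have x0 : x = 0.
    apply/matrixP => i j; exfalso; move: (ltn_ord i); by rewrite [X in (_ < X)%N]n0.
  by rewrite x0 eqxx in hx.
pose i0 : 'I_n := Ordinal npos.
rewrite mulmx_sumr mulmx_suml summxE.
rewrite (eq_bigr (fun i => c i * (x^T *m Q i *m x) 0 0)); last first.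
  by move=> i _; rewrite -scalemxAr -scalemxAl mxE.
rewrite (bigD1 i0) //=.
have h1 : Rlt R0 (c i0 * (x^T *m Q i0 *m x) 0 0).
  apply: Rmult_lt_0_compat; [exact: hc | exact: (proj2 (hQ i0))].
have h2 : Rle R0 (\sum_(i < n | i != i0) c i * (x^T *m Q i *m x) 0 0).
  apply: sum_ge0 => i _; apply: Rlt_le; apply: Rmult_lt_0_compat; [exact: hc | exact: (proj2 (hQ i))].
exact: Rplus_lt_le_0_compat h1 h2.
Qed.
Arguments posdef_comb {n c Q}.
Arguments posdef_det_pos {n P}.
Arguments det_le_exp_tr {n P}.

Section MD.
Variable K : comNzRingType.

Definition md n (Q : 'I_n -> 'M[K]_n) := \sum_(s : 'S_n) \det (\matrix_(i, j) Q (s j) i j).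
Definition Umx n (L : 'I_n -> 'M[K]_n) (k : {ffun 'I_n -> 'I_n}) : 'M[K]_n :=
  \matrix_(i, m) L m i (k m).

Arguments md {n}.
Arguments Umx {n}.
Lemma md_rank1 n (c : 'I_n -> K) (L : 'I_n -> 'M[K]_n) :
  md (fun m => c m *: (L m *m (L m)^T)) =
  (\prod_m c m) * \sum_(k : {ffun 'I_n -> 'I_n}) (\det (Umx L k)) ^+ 2.
Proof.
pose A (k : {ffun 'I_n -> 'I_n}) (p : 'S_n) := \prod_i Umx L k i (p i).
have step1 : forall s : 'S_n, \det (\matrix_(i, j) (c (s j) *: (L (s j) *m (L (s j))^T)) i j)
   = \sum_(sg : 'S_n) \sum_(k : {ffun 'I_n -> 'I_n})
       (-1) ^+ sg * ((\prod_m c m) * (A k (sg * s)%g * A k s)).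
  move=> s; rewrite /determinant; apply: eq_bigr => sg _.
  rewrite -mulr_sumr; congr (_ * _).
  rewrite (eq_bigr (fun i => \sum_k (c (s (sg i)) * (L (s (sg i)) i k * L (s (sg i)) (sg i) k)))); last first.
    move=> i _; rewrite !mxE mulr_sumr; apply: eq_bigr => k _; by rewrite !mxE.
  rewrite bigA_distr_bigA /=.
  pose p : 'S_n := (sg * s)%g.
  have hinj : injective (fun k : {ffun 'I_n -> 'I_n} => [ffun i => k (p i)]).
    move=> k1 k2 /ffunP h; apply/ffunP => m.
    have := h (p^-1 m)%g; by rewrite !ffunE permKV.
  rewrite (reindex_inj hinj) /=; apply: eq_bigr => k _.
  rewrite big_split big_split /=.
  have -> : \prod_(i < n) c (s (sg i)) = \prod_m c m.
    by rewrite [RHS](reindex_inj (@perm_inj _ p)); apply: eq_bigr => i _; rewrite permM.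
  congr (_ * _); rewrite /A; congr (_ * _).
    by apply: eq_bigr => i _; rewrite ffunE !mxE /p permM.
  rewrite [RHS](reindex_inj (@perm_inj _ sg)) /=.
  by apply: eq_bigr => i _; rewrite ffunE !mxE /p permM.
rewrite /md (eq_bigr _ (fun s _ => step1 s)).
rewrite (eq_bigr (fun s : 'S_n => \sum_(k : {ffun 'I_n -> 'I_n}) \sum_(sg : 'S_n) (-1) ^+ sg * ((\prod_m c m) * (A k (sg * s)%g * A k s)))); last first.
  by move=> s _; rewrite exchange_big.
rewrite exchange_big mulr_sumr; apply: eq_bigr => k _.
have inner : forall s : 'S_n, \sum_(sg : 'S_n) (-1) ^+ sg * A k (sg * s)%g = (-1) ^+ s * \det (Umx L k).
  move=> s; rewrite /determinant mulr_sumr.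
  have hinj : injective (fun t : 'S_n => (t * s^-1)%g) by move=> t1 t2 /mulIg.
  rewrite (reindex_inj hinj) /=; apply: eq_bigr => t _.
  rewrite -mulgA mulVg mulg1 odd_permM odd_permV signr_addb.
  by rewrite /A (mulrC ((-1) ^+ t)) -mulrA.
rewrite (eq_bigr (fun s : 'S_n => (\prod_m c m) * (A k s * ((-1) ^+ s * \det (Umx L k))))); last first.
  move=> s _; rewrite -inner mulr_sumr mulr_sumr; apply: eq_bigr => sg _.
  by rewrite mulrCA; congr (_ * _); rewrite mulrA; exact: mulrC.
rewrite -mulr_sumr; congr (_ * _).
rewrite expr2 {3}/determinant mulr_suml; apply: eq_bigr => s _.
by rewrite /A mulrCA mulrA.
Qed.
End MD.
Arguments md {K n}.
Arguments Umx {K n}.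

Theorem lemma2p2 (n : nat) (Q : 'I_n -> 'M[R]_n)
  (hQ : forall i, posdef_mx (Q i))
  (htr : \sum_(i < n) \tr (Q i) = n%:R)
  (xi : 'I_n -> R) (hxiH : in_H xi)
  (hmin : forall x : 'I_n -> R, in_H x -> Rle (f_lndet Q xi) (f_lndet Q x))
  (S : 'M[R]_n) (hS : S^T *m S = \sum_(i < n) exp (xi i) *: Q i)
  (T : 'M[R]_n) (hT : T = invmx S) :
  let tau := fun i => exp (xi i) in
  let B := fun i => tau i *: (T^T *m Q i *m T) in
  Rge (mixed_discr B) (mixed_discr Q).
Proof.
move=> tau B.
have [L hL] := fin_all_exists (fun m => chol (hQ m)).
pose G := \sum_(k : {ffun 'I_n -> 'I_n}) (\det (Umx L k)) ^+ 2.
have hDQ : mixed_discr Q = G.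
  have -> : mixed_discr Q = md (fun m => 1 *: (L m *m (L m)^T)).
    rewrite /mixed_discr /md; apply: eq_bigr => s _; congr (\det _).
    by apply/matrixP => i j; rewrite !mxE mul1r {1}(proj2 (hL (s j))) mxE.
  by rewrite md_rank1 big1 ?mul1r.
have hDB : mixed_discr B = (\prod_m tau m) * \sum_(k : {ffun 'I_n -> 'I_n}) (\det (Umx (fun m => T^T *m L m) k)) ^+ 2.
  rewrite -md_rank1 /mixed_discr /md; apply: eq_bigr => s _; congr (\det _).
  apply/matrixP => i j.
  have e : B (s j) = tau (s j) *: (T^T *m L (s j) *m (T^T *m L (s j))^T).
    by rewrite /B (proj2 (hL (s j))) trmx_mul trmxK !mulmxA.
  by rewrite [LHS]mxE e [RHS]mxE.
have hU : forall k, Umx (fun m => T^T *m L m) k = T^T *m Umx L k.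
  by move=> k; apply/matrixP => i m; rewrite !mxE; apply: eq_bigr => p _; rewrite !mxE.
have htau : \prod_m tau m = 1.
  by rewrite /tau -exp_sum hxiH exp_0.
pose dS := \det S.
pose dA := \det (\sum_(i < n) exp (xi i) *: Q i).
have hA : posdef_mx (\sum_(i < n) exp (xi i) *: Q i) := posdef_comb (fun i => exp_pos (xi i)) hQ.
have dApos : Rlt R0 dA := posdef_det_pos hA.
have dAS : dA = dS ^+ 2 by rewrite /dA -hS det_mulmx det_tr expr2.
have hDB' : mixed_discr B = dA^-1 * G.
  rewrite hDB htau mul1r (eq_bigr (fun k => (\det T)^+2 * (\det (Umx L k))^+2)); last first.
    by move=> k _; rewrite hU det_mulmx det_tr exprMn.
  by rewrite -mulr_sumr hT det_inv dAS exprVn.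
have hP : posdef_mx (\sum_(i < n) exp 0 *: Q i) := posdef_comb (fun i => exp_pos 0) hQ.
pose dP := \det (\sum_(i < n) exp 0 *: Q i).
have dPpos : Rlt R0 dP := posdef_det_pos hP.
have hAP : Rle dA dP.
  have h0 : in_H (fun _ : 'I_n => (0 : R)) by rewrite /in_H big1.
  have := hmin _ h0.
  rewrite /f_lndet -/dA -/dP => hl.
  apply: Rnot_lt_le => h; have := ln_increasing _ _ dPpos h; lra.
have hP1 : Rle dP 1.
  have := det_le_exp_tr hP.
  have -> : trm (\sum_(i < n) exp 0 *: Q i) = 0.
    rewrite /trm raddf_sum /= (eq_bigr (fun i => \tr (Q i))); last first.
      by move=> i _; rewrite linearZ /= exp_0 mul1r.
    by rewrite htr; apply: Rminus_diag_eq.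
  by rewrite /dP exp_0.
have Gpos : Rle R0 G.
  by apply: sum_ge0 => k _; rewrite expr2; exact: Rle_0_sqr.
have dA0 : dA != 0 by apply/eqP => h; rewrite h in dApos; exact: Rlt_irrefl _ dApos.
have inv : dA^-1 = Rinv dA.
  change (R_inv dA = Rinv dA); rewrite /R_inv; case: Req_EM_T => // h.
  by rewrite h eqxx in dA0.
rewrite hDB' hDQ inv.
have h1 : Rle 1 (Rinv dA).
  rewrite -Rinv_1; apply: Rinv_le_contravar => //; exact: Rle_trans hAP hP1.
apply: Rle_ge; rewrite -{1}(Rmult_1_l G); exact: Rmult_le_compat_r.
Qed.
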